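(* Under the standing assumptions (with $K\neq0$) and $\lambda_{\max}(M(0))<1$, let $r^*\in(0,r_A)$ be the unique profit rate with $\lambda_{\max}(M(r^* ))=1$. Then: (i) for all $0\le r_1<r_2\le r^*$, $\Theta^{price}(r_2)\subsetneq\Theta^{price}(r_1)\subseteq\Theta^{val}$; (ii) $\Theta^{price}(r^* )=\{\mathbf w^*\}$, where $\mathbf w^*$ is the left Perron eigenvector of $M(r^* )$ (all components positive) normalized by $w^*_1=1$; in particular no $\mathbf w\in\Theta^{price}(r^* )$ satisfies $\mathbf w^T(I-M(r^* ))>\mathbf 0^T$ strictly.
   Context: Fix $n\ge 2$. $A$ and $K$ are $n\times n$ entrywise nonnegative real matrices, with $K$ not the zero matrix; $\delta_1,\dots,\delta_n\in(0,1]$, $D=K\,\mathrm{diag}(\delta_1,\dots,\delta_n)$, and $\tilde A=A+D$. $L=\mathrm{diag}(l_1,\dots,l_n)$ with all $l_j>0$. $B$ is an $n\times n$ entrywise nonnegative matrix with no zero column. Standing assumption: $\tilde A$ is irreducible and $\lambda_{\max}(\tilde A)<1$, where $\lambda_{\max}(X)$ denotes the spectral radius of a square matrix $X$. $r_A>0$ is defined by $\lambda_{\max}(\tilde A+r_AK)=1$. For $r\in[0,r_A)$, $M(r):=L[I-\tilde A-rK]^{-1}B$, and $M_0:=M(0)=L(I-\tilde A)^{-1}B$. Vector inequalities are componentwise. The value-feasible domain is $\Theta^{val}:=\{\mathbf c\in\mathbb R^n:\ c_j>0\ \forall j,\ c_1=1,\ \mathbf c^T(I-M_0)\ge \mathbf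 0^T\}$, and the price–wage feasible domain is $\Theta^{price}(r):=\{\mathbf w\in\mathbb R^n:\ w_j>0\ \forall j,\ w_1=1,\ \mathbf w^T(I-M(r))\ge\mathbf 0^T\}$. *)

(* Defs.v *)
From HB Require Import structures.
From mathcomp Require Import all_boot all_order all_algebra all_fingroup.
From mathcomp Require Import boolp classical_sets reals.
From mathcomp Require Import complex.
Set Implicit Arguments. Unset Strict Implicit. Unset Printing Implicit Defensive.
Import Order.TTheory GRing.Theory Num.Theory.
Local Open Scope ring_scope.
Local Open Scope classical_set_scope.

Section Defs.
Variable R : realType.

Definition nonneg_mx (m p : nat) (X : 'M[R]_(m, p)) : Prop :=
  forall i j, 0 <= X i j.

Definition ceigenvalue (n : nat) (X : 'M[R]_n) (z : R[i]) : Prop :=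
  eigenvalue (map_mx (real_complex R) X) z.

Definition specrad (n : nat) (X : 'M[R]_n) : R :=
  sup [set x : R | exists z : R[i], ceigenvalue X z /\ x = ComplexField.Normc.normc z].

(* reducible / irreducible square matrix (permutation-similar to block upper triangular) *)
Definition reducible_mx (n : nat) (X : 'M[R]_n) : Prop :=
  exists (s : 'S_n) (k : nat), (0 < k < n)%N /\
    forall i j : 'I_n, (k <= i)%N -> (j < k)%N -> X (s i) (s j) = 0.
Definition irreducible_mx (n : nat) (X : 'M[R]_n) : Prop := ~ reducible_mx X.

Definition Mr (n : nat) (L At K B : 'M[R]_n) (r : R) : 'M[R]_n :=
  L *m invmx (1%:M - At - r *: K) *m B.

Definition rv_ge0 (n : nat) (v : 'rV[R]_n) : Prop := forall j, 0 <= v 0 j.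
Definition rv_gt0 (n : nat) (v : 'rV[R]_n) : Prop := forall j, 0 < v 0 j.

Definition feasible (n : nat) (i1 : 'I_n) (M : 'M[R]_n) : set 'rV[R]_n :=
  [set c | rv_gt0 c /\ c 0 i1 = 1 /\ rv_ge0 (c *m (1%:M - M))].

End Defs.

Definition idx1 (n : nat) (hn : (1 < n)%N) : 'I_n := Ordinal (ltnW hn).

(* Main.v *)
Require Import Defs.
From HB Require Import structures.
From mathcomp Require Import all_boot all_order all_algebra all_fingroup.
From mathcomp Require Import boolp classical_sets reals.
From mathcomp Require Import complex polyrcf.
From mathcomp Require Import ring lra zify.
Set Implicit Arguments. Unset Strict Implicit. Unset Printing Implicit Defensive.
Import Order.TTheory GRing.Theory Num.Theory.
Local Open Scope ring_scope.
Local Open Scope classical_set_scope.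
Section PF.
Variable R : realType.
Local Notation C := (R[i]).
Local Notation normc := (@ComplexField.Normc.normc R).

Lemma normc_sum (I : finType) (f : I -> C) :
  normc (\sum_i f i) <= \sum_i normc (f i).
Proof.
apply: (big_ind2 (fun a b => normc a <= b)).
- by rewrite ComplexField.Normc.normc0.
- move=> a b a' b' h1 h2; apply: le_trans (le_normcD (_ : Rcomplex R) _) _.
  exact: lerD.
- by [].
Qed.

Lemma normc_real (x : R) : normc (real_complex R x) = `|x|.
Proof.
by rewrite /ComplexField.Normc.normc /= expr0n /= addr0 sqrtr_sqr.
Qed.

Lemma normc_ge0 (z : C) : 0 <= normc z.
Proof. by case: z => a b; rewrite /ComplexField.Normc.normc sqrtr_ge0. Qed.

Variable n : nat.

Lemma ceig_root (P : 'M[R]_n) z :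
  ceigenvalue P z <-> root (char_poly (map_mx (real_complex R) P)) z.
Proof. by rewrite /ceigenvalue eigenvalue_root_char. Qed.

Lemma eig_list (P : 'M[R]_n) : exists r : seq C,
  (forall z, ceigenvalue P z <-> z \in r) /\ ((0 < n)%N -> r != [::]).
Proof.
set p := char_poly (map_mx (real_complex R) P).
have [r Hr] := closed_field_poly_normal p.
have lc : lead_coef p = 1 := monicP (char_poly_monic _).
exists r; split.
  move=> z; rewrite ceig_root -/p Hr lc scale1r root_prod_XsubC; split=> //.
move=> n0; apply/eqP=> r0; move: Hr; rewrite r0 big_nil lc scale1r => Hp.
have := size_char_poly (map_mx (real_complex R) P); rewrite -/p Hp size_poly1.
by case: (n) n0.
Qed.

Lemma seq_max (r : seq C) : r != [::] ->
  exists2 z, z \in r & forall z', z' \in r -> normc z' <= normc z.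
Proof.
elim: r => // a [|b r] IH _.
  by exists a; rewrite ?mem_seq1 // => z'; rewrite mem_seq1 => /eqP ->.
have [z zin zmax] := IH isT.
case: (leP (normc a) (normc z)) => h.
  exists z; first by rewrite in_cons zin orbT.
  move=> z'; rewrite in_cons => /orP [/eqP -> //|]; exact: zmax.
exists a; first by rewrite in_cons eqxx.
move=> z'; rewrite in_cons => /orP [/eqP -> //|/zmax h']; exact: le_trans h' (ltW h).
Qed.

Lemma specrad_spec (P : 'M[R]_n) : (0 < n)%N ->
  (exists z, ceigenvalue P z /\ normc z = specrad P) /\
  (forall z, ceigenvalue P z -> normc z <= specrad P).
Proof.
move=> n0; have [r [Hr rn]] := eig_list P.
have [z zin zmax] := seq_max (rn n0).
set E := [set x : R | exists z : C, ceigenvalue P z /\ x = normc z].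
have ub : ubound E (normc z).
  by move=> x [z' [/Hr z'in ->]]; exact: zmax.
have Ez : E (normc z) by exists z; split => //; apply/Hr.
have eq : specrad P = normc z.
  apply/eqP; rewrite eq_le; apply/andP; split.
    by apply: ge_sup => //; exists (normc z).
  by apply: ub_le_sup => //; exists (normc z).
split; first by exists z; split => //; apply/Hr.
by move=> z' /Hr /zmax; rewrite eq.
Qed.

Lemma specrad_ge0 (P : 'M[R]_n) : (0 < n)%N -> 0 <= specrad P.
Proof.
by move=> n0; have [[z [_ <-]] _] := specrad_spec P n0; exact: normc_ge0.
Qed.

End PF.
Section PF2.
Variable R : realType.
Local Notation C := (R[i]).
Local Notation normc := (@ComplexField.Normc.normc R).
Variable n : nat.

Lemma eig_absvec (P : 'M[R]_n) z : nonneg_mx P -> ceigenvalue P z ->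
  exists u : 'rV[R]_n, rv_ge0 u /\ u != 0 /\
     forall j, normc z * u 0 j <= (u *m P) 0 j.
Proof.
move=> P0 /eigenvalueP [v Hv vnz].
exists (\row_j normc (v 0 j)); split; [|split].
- by move=> j; rewrite mxE normc_ge0.
- apply/eqP => u0; move/eqP: vnz; apply; apply/rowP => j.
  move/rowP: u0 => /(_ j); rewrite !mxE => /ComplexField.Normc.eq0_normc.
  by [].
- move=> j; rewrite mxE -ComplexField.Normc.normcM.
  have -> : z * v 0 j = (z *: v) 0 j by rewrite mxE.
  rewrite -Hv mxE; apply: le_trans (normc_sum _) _; rewrite mxE.
  apply: ler_sum => i _; rewrite !mxE ComplexField.Normc.normcM normc_real.
  by rewrite ger0_norm.
Qed.

Lemma real_ceig (P : 'M[R]_n) (v : 'rV[R]_n) t : v != 0 -> v *m P = t *: v ->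
  ceigenvalue P (real_complex R t).
Proof.
move=> vnz Hv; apply/eigenvalueP; exists (map_mx (real_complex R) v).
  by rewrite -map_mxM Hv map_mxZ.
by rewrite map_mx_eq0.
Qed.

End PF2.
Section PF3.
Variable R : realType.
Variable n : nat.

Lemma fin_argmax (I : finType) (i0 : I) (f : I -> R) :
  exists i, forall k, f k <= f i.
Proof.
case: (@arg_maxP _ R I i0 xpredT f isT) => i _ H.
by exists i => k; exact: H.
Qed.

Lemma mulB_entry (w : 'rV[R]_n) (P : 'M[R]_n) t i :
  (w *m (t%:M - P)) 0 i = t * w 0 i - (w *m P) 0 i.
Proof. by rewrite mulmxBr mul_mx_scalar !mxE. Qed.

Lemma mul_entry (w : 'rV[R]_n) (P : 'M[R]_n) j :
  (w *m P) 0 j = \sum_i w 0 i * P i j.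
Proof. by rewrite mxE. Qed.

Lemma ratio_pos (P : 'M[R]_n) (x : 'rV_n) c t : nonneg_mx P -> rv_gt0 x -> c < t ->
  (forall j, (x *m P) 0 j <= c * x 0 j) ->
  forall w : 'rV_n, rv_ge0 (w *m (t%:M - P)) -> rv_ge0 w.
Proof.
move=> P0 x0 ct xP w b0 j.
rewrite leNgt; apply/negP => wj.
have [i Hi] := fin_argmax j (fun k => - w 0 k / x 0 k).
set m := - w 0 i / x 0 i in Hi.
have xi := x0 i.
have m0 : 0 < m.
  apply: lt_le_trans (Hi j); apply: divr_gt0 => //; by rewrite oppr_gt0.
have wk : forall k, - m * x 0 k <= w 0 k.
  move=> k; have := Hi k; rewrite ler_pdivrMr ?x0 // => h; lra.
have wi : w 0 i = - m * x 0 i.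
  by rewrite /m mulNr divfK ?opprK // gt_eqF.
have h1 : - m * (c * x 0 i) <= (w *m P) 0 i.
  apply: le_trans (_ : - m * (x *m P) 0 i <= _).
    by rewrite !mulNr lerN2 ler_pM2l.
  rewrite !mul_entry mulr_sumr; apply: ler_sum => k _.
  by rewrite mulrA ler_wpM2r.
have := b0 i; rewrite mulB_entry wi subr_ge0 => h2.
have hp : 0 < m * x 0 i * (t - c) by apply: mulr_gt0; [apply: mulr_gt0|rewrite subr_gt0].
nra.
Qed.


End PF3.
Section PF4.
Variable R : realType.
Variable n : nat.

Lemma ge0_kernel (A : 'M[R]_n) :
  (forall w : 'rV_n, rv_ge0 (w *m A) -> rv_ge0 w) ->
  A \in unitmx /\ nonneg_mx (invmx A).
Proof.
move=> H.
have uA : A \in unitmx.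
  rewrite unitmxE unitfE; apply/negP => dA; move: (det0P dA) => -[v vnz vA].
  move/eqP: vnz; apply; apply/rowP => j; apply/eqP; rewrite eq_le.
  have h1 : rv_ge0 v by apply: H => k; rewrite vA mxE.
  have h2 : rv_ge0 (- v) by apply: H => k; rewrite mulNmx vA oppr0 mxE.
  have := h2 j; rewrite !mxE oppr_ge0 => ->; by rewrite h1.
split => // i j.
have := H (row i (invmx A)); rewrite -row_mul mulVmx // => /(_ _ j).
by rewrite !mxE; apply => k; rewrite !mxE ler0n.
Qed.

Lemma ratio_inv (P : 'M[R]_n) (x : 'rV_n) c t : nonneg_mx P -> rv_gt0 x -> c < t ->
  (forall j, (x *m P) 0 j <= c * x 0 j) ->
  (t%:M - P) \in unitmx /\ nonneg_mx (invmx (t%:M - P)).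
Proof. by move=> P0 x0 ct xP; apply: ge0_kernel; apply: (ratio_pos P0 x0 ct xP). Qed.

End PF4.
Section PF5.
Variable R : realType.

Lemma poly_right_lim (p : {poly R}) a :
  (forall s, a < s -> 0 <= p.[s]) -> 0 <= p.[a].
Proof.
move=> H; rewrite leNgt; apply/negP => pa.
have p0 : p != 0 by apply: contraTneq pa => ->; rewrite hornerC ltxx.
have aa : a < a + 1 by rewrite ltrDl ltr01.
have [y hy] := neighpr_wit aa p0.
have ay : a < y by move: hy; rewrite /neighpr in_itv /= => /andP [].
have := sgr_neighpr hy; rewrite sgp_rightNroot; last by rewrite /root lt_eqF.
rewrite [Num.sg p.[a]]ltr0_sg // => hs.
have := H _ ay; rewrite -sgr_ge0 hs.
by rewrite oppr_ge0 ler10.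
Qed.

Variable n : nat.

Lemma eval_char_mx (P : 'M[R]_n) s :
  map_mx (horner_eval s) (char_poly_mx P) = s%:M - P.
Proof.
apply/matrixP => i j; rewrite !mxE /= horner_evalE.
by rewrite hornerD hornerN hornerMn hornerX hornerC.
Qed.

Lemma eval_adj (P : 'M[R]_n) s i j :
  ((\adj (char_poly_mx P)) i j).[s] = (\adj (s%:M - P)) i j.
Proof.
by rewrite -eval_char_mx -map_mx_adj [RHS]mxE.
Qed.

Lemma eval_det (P : 'M[R]_n) s : (char_poly P).[s] = \det (s%:M - P).
Proof. by rewrite -eval_char_mx det_map_mx. Qed.

End PF5.
Section PF6.
Variable R : realType.
Variable n : nat.

Definition good (P : 'M[R]_n) s :=
  (s%:M - P) \in unitmx /\ nonneg_mx (invmx (s%:M - P)).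

Lemma elem_le_sum (f : 'I_n -> R) i : (forall k, 0 <= f k) -> f i <= \sum_k f k.
Proof. by move=> h; rewrite (bigD1 i) //= lerDl sumr_ge0. Qed.

Lemma invmx_entry (A : 'M[R]_n) i j : A \in unitmx ->
  invmx A i j = (\det A)^-1 * \adj A i j.
Proof. by move=> uA; rewrite /invmx uA mxE. Qed.

Lemma step_good (P : 'M[R]_n) s : nonneg_mx P -> 0 < s -> good P s ->
  exists2 d, 0 < d & forall s', s - d < s' -> good P s'.
Proof.
move=> P0 s0 [uA N0].
set x := (const_mx 1 : 'rV[R]_n) *m invmx (s%:M - P).
have hx : x *m (s%:M - P) = const_mx 1 by rewrite /x mulmxKV.
have x0 : forall i, 0 <= x 0 i.
  by move=> i; rewrite mul_entry; apply: sumr_ge0 => k _; rewrite mxE mul1r N0.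
have xP0 : forall i, 0 <= (x *m P) 0 i.
  by move=> i; rewrite mul_entry; apply: sumr_ge0 => k _; rewrite mulr_ge0.
have e : forall i, s * x 0 i - (x *m P) 0 i = 1.
  by move=> i; rewrite -mulB_entry hx mxE.
have xpos : rv_gt0 x.
  move=> i; have := e i; have := xP0 i; have := x0 i => h1 h2 h3.
  rewrite lt_neqAle h1 andbT; apply/eqP => h; rewrite -h mulr0 in h3; lra.
set S := \sum_k x 0 k.
have S0 : 0 <= S by apply: sumr_ge0.
exists (1 + S)^-1; first by rewrite invr_gt0; lra.
move=> s' hs'; apply: (@ratio_inv _ _ P x (s - (1 + S)^-1)) => // j.
have xj : x 0 j <= S by apply: elem_le_sum.
have dj : (1 + S)^-1 * x 0 j <= 1.
  by rewrite ler_pdivrMl ?mulr1; lra.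
have := e j; rewrite mulrBl; lra.
Qed.

Lemma unit_above (P : 'M[R]_n) s : (0 < n)%N -> specrad P < s ->
  (s%:M - P) \in unitmx.
Proof.
move=> n0 hs; rewrite unitmxE unitfE; apply/negP => dA.
have [v vnz vA] := det0P dA.
have hv : v *m P = s *: v.
  by move/eqP: vA; rewrite mulmxBr mul_mx_scalar subr_eq0 => /eqP <-.
have := (specrad_spec P n0).2 _ (real_ceig vnz hv); rewrite normc_real => h.
have := le_lt_trans (ler_norm s) (le_lt_trans h hs); by rewrite ltxx.
Qed.

Lemma big_good (P : 'M[R]_n) s : nonneg_mx P -> \sum_i \sum_j P i j < s -> good P s.
Proof.
move=> P0 hs; apply: (@ratio_inv _ _ P (const_mx 1) (\sum_i \sum_j P i j)) => //.
  by move=> j; rewrite mxE ltr01.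
move=> j; rewrite mul_entry mxE mulr1; apply: ler_sum => i _.
rewrite mxE mul1r; exact: (@elem_le_sum (fun k => P i k) j (fun k => P0 i k)).
Qed.

Lemma resolvent_ge0 (P : 'M[R]_n) t : (0 < n)%N -> nonneg_mx P ->
  specrad P < t -> good P t.
Proof.
move=> n0 P0 ht.
have r0 := specrad_ge0 P n0.
split; first exact: unit_above.
case: (pselect (nonneg_mx (invmx (t%:M - P)))) => // bad; exfalso.
set c := \sum_i \sum_j P i j.
set B := [set s | specrad P < s /\ ~ nonneg_mx (invmx (s%:M - P))].
have ubB : ubound B c.
  move=> s [_ hs]; rewrite leNgt; apply/negP => cs.
  by apply: hs; case: (big_good P0 cs).
have Bt : B t by [].
have hB : has_ubound B by exists c.
set t1 := sup B.
have tt1 : t <= t1 by apply: ub_le_sup.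
have above : forall s, t1 < s -> nonneg_mx (invmx (s%:M - P)).
  move=> s hs; case: (pselect (nonneg_mx (invmx (s%:M - P)))) => // hn.
  have : B s by split => //; lra.
  by move/(ub_le_sup hB); rewrite leNgt hs.
have g1 : good P t1.
  have u1 : (t1%:M - P) \in unitmx by apply: unit_above => //; lra.
  split => // i j.
  set f := ((\adj (char_poly_mx P)) i j) * char_poly P.
  have hf : forall s, (s%:M - P) \in unitmx ->
      f.[s] = invmx (s%:M - P) i j * (\det (s%:M - P))^+2.
    move=> s us; rewrite hornerM eval_adj eval_det invmx_entry //.
    have dn : \det (s%:M - P) != 0 by rewrite -unitfE -unitmxE.
    by rewrite expr2; field.
  have fge : 0 <= f.[t1].
    apply: poly_right_lim => s hs; rewrite hf; last by apply: unit_above => //; lra.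
    by rewrite mulr_ge0 ?sqr_ge0 // above.
  have dn : \det (t1%:M - P) != 0 by rewrite -unitfE -unitmxE.
  have := fge; rewrite hf // pmulr_lge0 //.
  by rewrite lt_def sqr_ge0 andbT sqrf_eq0 dn.
have t10 : 0 < t1 by lra.
have [d d0 hd] := step_good P0 t10 g1.
have : t1 <= t1 - d.
  apply: ge_sup; first by exists t.
  move=> b [hb1 hb2]; rewrite leNgt; apply/negP => hb.
  by apply: hb2; case: (hd b hb).
lra.
Qed.

End PF6.
Section PF7.
Variable R : realType.
Variable n : nat.

Lemma nz_pos (v : 'rV[R]_n) : rv_ge0 v -> v != 0 -> exists k, 0 < v 0 k.
Proof.
move=> v0 vnz; case: (pselect (exists k, 0 < v 0 k)) => // hn; exfalso.
move/eqP: vnz; apply; apply/rowP => k; rewrite mxE.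
apply/eqP; rewrite eq_le v0 andbT leNgt; apply/negP => h; apply: hn; by exists k.
Qed.

Lemma pos_mul (v : 'rV[R]_n) (P : 'M[R]_n) : rv_ge0 v -> v != 0 ->
  (forall i j, 0 < P i j) -> rv_gt0 (v *m P).
Proof.
move=> v0 vnz P0 j; have [k hk] := nz_pos v0 vnz.
rewrite mul_entry; apply: lt_le_trans (_ : v 0 k * P k j <= _).
  exact: mulr_gt0.
apply: (@elem_le_sum _ _ (fun i => v 0 i * P i j)) => i.
by rewrite mulr_ge0 // ltW.
Qed.

Lemma lower_bound (P : 'M[R]_n) (y : 'rV_n) c : (0 < n)%N -> nonneg_mx P ->
  rv_ge0 y -> y != 0 -> (forall j, c * y 0 j <= (y *m P) 0 j) -> c <= specrad P.
Proof.
move=> n0 P0 y0 ynz hy; rewrite leNgt; apply/negP => hc.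
have [uA N0] := resolvent_ge0 n0 P0 hc.
move/eqP: ynz; apply; apply/rowP => j; rewrite mxE; apply/eqP.
rewrite eq_le y0 andbT.
rewrite -(mulmxK uA y) mul_entry; apply: sumr_le0 => k _.
apply: mulr_le0_ge0 => //.
by rewrite mulB_entry subr_le0.
Qed.

Lemma pf_pos (P : 'M[R]_n) : (0 < n)%N -> (forall i j, 0 < P i j) ->
  exists u : 'rV_n, rv_gt0 u /\ u *m P = specrad P *: u /\ 0 < specrad P.
Proof.
move=> n0 Ppos.
have P0 : nonneg_mx P by move=> i j; exact: ltW.
have [[z [ez nz]] _] := specrad_spec P n0.
have [u [u0 [unz hu]]] := eig_absvec P0 ez.
rewrite nz in hu; set r := specrad P in hu *.
set g := u *m P - r *: u.
have gE : forall j, g 0 j = (u *m P) 0 j - r * u 0 j by move=> j; rewrite !mxE.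
have g0 : rv_ge0 g by move=> j; rewrite gE subr_ge0.
have geq : g = 0.
  case: (pselect (g = 0)) => // /eqP gnz; exfalso.
  set y := u *m P.
  have ypos : rv_gt0 y by apply: pos_mul.
  have gP : rv_gt0 (g *m P) by apply: pos_mul.
  have gPE : forall j, (g *m P) 0 j = (y *m P) 0 j - r * y 0 j.
    by move=> j; rewrite /g mulmxBl -scalemxAl !mxE.
  have [i Hi] := fin_argmax (Ordinal n0) (fun k => - ((g *m P) 0 k / y 0 k)).
  set e := (g *m P) 0 i / y 0 i in Hi.
  have e0 : 0 < e by apply: divr_gt0.
  have he : forall j, (r + e) * y 0 j <= (y *m P) 0 j.
    move=> j; have := Hi j; rewrite lerN2 ler_pdivlMr // => h.
    by rewrite mulrDl; have := gPE j; lra.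
  have ynz : y != 0.
    apply/eqP => y0; have := ypos (Ordinal n0); by rewrite y0 mxE ltxx.
  have := lower_bound n0 P0 (fun j => ltW (ypos j)) ynz he.
  rewrite -/r; lra.
have uP : u *m P = r *: u by apply/subr0_eq.
have ypos : rv_gt0 (u *m P) by apply: pos_mul.
have r0 : 0 < r.
  rewrite lt_def specrad_ge0 // andbT; apply/eqP => r0.
  by have := ypos (Ordinal n0); rewrite uP r0 scale0r mxE ltxx.
exists u; split; last by split.

by move=> j; have := ypos j; rewrite uP mxE pmulr_rgt0.
Qed.

End PF7.
Section PF8.
Variable R : realType.
Variable n : nat.

Lemma irr_closed (X : 'M[R]_n) (Z : {set 'I_n}) : irreducible_mx X ->
  (forall i k, i \in Z -> k \notin Z -> X i k = 0) -> Z = finset.set0 \/ Z = finset.setT.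
Proof.
move=> irr H.
case: (set_0Vmem Z) => [->|[i0 i0Z]]; first by left.
case: (set_0Vmem (~: Z)) => [hc|[j0 j0c]].
  right; apply/setP => x; rewrite inE.
  by move/setP: hc => /(_ x); rewrite finset.in_setC finset.in_set0 => /negbFE.
exfalso; apply: irr.
set l := enum (~: Z) ++ enum Z.
have sl : size l = n.
  by rewrite size_cat -!cardE addnC cardsC card_ord.
have ul : uniq l.
  rewrite cat_uniq !enum_uniq /= andbT; apply/hasPn => x.
  by rewrite !mem_enum finset.in_setC => ->.
have finj : injective (fun i : 'I_n => nth i0 l i).
  move=> i j /eqP; rewrite nth_uniq ?sl // => /eqP; exact: val_inj.
have e : (#|Z| + #|~: Z| = n)%N by rewrite cardsC card_ord.
have c1 : (0 < #|Z|)%N.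
  by rewrite lt0n cards_eq0; apply/eqP => e'; move: i0Z; rewrite e' finset.in_set0.
have c2 : (0 < #|~: Z|)%N.
  by rewrite lt0n cards_eq0; apply/eqP => e'; move: j0c; rewrite e' finset.in_set0.
exists (perm finj), #|~: Z|; split.
  apply/andP; split => //; lia.
move=> i j ki jk; rewrite !permE; apply: H.
  rewrite /l nth_cat -cardE ltnNge ki /=.
  rewrite -mem_enum; apply: mem_nth; rewrite -cardE.
  by rewrite ltn_subLR // addnC e.
rewrite /l nth_cat -cardE jk /=.
rewrite -finset.in_setC -mem_enum; apply: mem_nth; by rewrite -cardE.
Qed.

Lemma irr_mono (X Y : 'M[R]_n) : nonneg_mx X -> (forall i j, X i j <= Y i j) ->
  irreducible_mx X -> irreducible_mx Y.
Proof.
move=> X0 XY irr [s [k [hk H]]]; apply: irr; exists s, k; split => // i j ki jk.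
by apply/eqP; rewrite eq_le X0 andbT -(H i j ki jk) XY.
Qed.

Lemma irr_resolvent_pos (X : 'M[R]_n) t : irreducible_mx X -> nonneg_mx X ->
  good X t -> forall i j, 0 < invmx (t%:M - X) i j.
Proof.
move=> irr X0 [uA N0] i j.
set N := invmx (t%:M - X).
have hN : forall a b, t * N a b = (a == b)%:R + \sum_k X a k * N k b.
  move=> a b; move/matrixP: (mulmxV uA) => /(_ a b).
  rewrite mulmxBl mul_scalar_mx !mxE => e.
  by rewrite -/N in e; lra.
set Z : {set 'I_n} := finset.finset (fun a => N a j == 0).
have cl : forall a k, a \in Z -> k \notin Z -> X a k = 0.
  move=> a k; rewrite !inE => /eqP za nzk.
  have := hN a j; rewrite za mulr0 => e.
  have s0 : forall b, 0 <= X a b * N b j by move=> b; rewrite mulr_ge0.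
  have d0 : 0 <= ((a == j)%:R : R) by rewrite ler0n.
  have hs : \sum_b X a b * N b j = 0.
    apply/eqP; rewrite eq_le sumr_ge0 // andbT.
    have : 0 <= \sum_b X a b * N b j by rewrite sumr_ge0.
    lra.
  have := (psumr_eq0P (fun b _ => s0 b) hs) k isT.
  have nz : N k j != 0 by [].
  by move/eqP; rewrite mulf_eq0 (negbTE nz) orbF => /eqP.
case: (irr_closed irr cl) => hZ.
  rewrite lt_def N0 andbT; apply/eqP => e.
  have : i \in Z by rewrite inE e.
  by rewrite hZ finset.in_set0.
exfalso; have : j \in Z by rewrite hZ finset.in_setT.
rewrite inE => /eqP e; have := hN j j; rewrite e mulr0 eqxx.
have : 0 <= \sum_k X j k * N k j by apply: sumr_ge0 => k _; rewrite mulr_ge0.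
have t1 : (true%:R : R) = 1 by [].
lra.
Qed.

End PF8.
Section PF9.
Variable R : realType.
Variable n : nat.

Lemma right_ceig (P : 'M[R]_n) (z : 'cV_n) t : z != 0 -> P *m z = t *: z ->
  ceigenvalue P (real_complex R t).
Proof.
move=> znz hz.
have hA : (t%:M - P) *m z = 0 by rewrite mulmxBl mul_scalar_mx hz subrr.
have dA : \det (t%:M - P) == 0.
  apply: contraT => dn.
  have uA : (t%:M - P) \in unitmx by rewrite unitmxE unitfE.
  by move: znz; rewrite -(mulKmx uA z) hA mulmx0 eqxx.
have [v vnz vA] := det0P dA.
apply: (real_ceig vnz).
by move/eqP: vA; rewrite mulmxBr mul_mx_scalar subr_eq0 => /eqP <-.
Qed.

Lemma dot_entry (w : 'rV[R]_n) (z : 'cV_n) : (w *m z) 0 0 = \sum_i w 0 i * z i 0.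
Proof. by rewrite mxE. Qed.

Lemma pos_dot (w : 'rV[R]_n) (z : 'cV_n) : rv_ge0 w -> w != 0 ->
  (forall i, 0 < z i 0) -> 0 < (w *m z) 0 0.
Proof.
move=> w0 wnz z0; have [k hk] := nz_pos w0 wnz.
rewrite dot_entry; apply: lt_le_trans (_ : w 0 k * z k 0 <= _).
  exact: mulr_gt0.
apply: (@elem_le_sum _ _ (fun i => w 0 i * z i 0)) => i.
by rewrite mulr_ge0 // ltW.
Qed.

Lemma dot_mono (a b : 'rV[R]_n) (z : 'cV_n) : (forall i, a 0 i <= b 0 i) ->
  (forall i, 0 <= z i 0) -> (a *m z) 0 0 <= (b *m z) 0 0.
Proof.
move=> ab z0; rewrite !dot_entry; apply: ler_sum => i _.
exact: ler_wpM2r.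
Qed.

Lemma pf_irr_vec (Y : 'M[R]_n) : (0 < n)%N -> irreducible_mx Y -> nonneg_mx Y ->
  exists (z : 'cV_n) th, (forall i, 0 < z i 0) /\ Y *m z = th *: z.
Proof.
move=> n0 irr Y0.
set t := specrad Y + 1.
have ht : specrad Y < t by rewrite /t ltrDl ltr01.
have g := resolvent_ge0 n0 Y0 ht.
have Npos := irr_resolvent_pos irr Y0 g.
case: g => uA _.
set N := invmx (t%:M - Y) in Npos.
have NTpos : forall i j, 0 < N^T i j by move=> i j; rewrite mxE Npos.
have [u [u0 [hu mu0]]] := pf_pos n0 NTpos.
set mu := specrad N^T in hu mu0.
set z : 'cV_n := u^T.
have hz : N *m z = mu *: z.
  apply/matrixP => i j; rewrite (ord1 j).
  move/matrixP: hu => /(_ 0 i); rewrite !mxE => <-.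
  by apply: eq_bigr => k _; rewrite !mxE mulrC.
have e1 : (t%:M - Y) *m (N *m z) = z by rewrite mulmxA mulmxV // mul1mx.
rewrite hz -scalemxAr mulmxBl mul_scalar_mx in e1.
have mn : mu != 0 by rewrite gt_eqF.
have e3 : t *: z - Y *m z = mu^-1 *: z by rewrite -[X in _ = mu^-1 *: X]e1 scalerA mulVf // scale1r.
exists z, (t - mu^-1); split; first by move=> i; rewrite mxE u0.
by rewrite scalerBl -e3 opprB addrC subrK.
Qed.

Lemma pf_val (Y : 'M[R]_n) (z : 'cV_n) th : (0 < n)%N -> nonneg_mx Y ->
  (forall i, 0 < z i 0) -> Y *m z = th *: z -> th = specrad Y.
Proof.
move=> n0 Y0 z0 Yz.
have znz : z != 0.
  apply/eqP => e; have := z0 (Ordinal n0); by rewrite e mxE ltxx.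
have [[z1 [ez1 nz1]] sb] := specrad_spec Y n0.
have le1 : th <= specrad Y.
  have := sb _ (right_ceig znz Yz); rewrite normc_real => h.
  exact: le_trans (ler_norm th) h.
have [w [w0 [wnz hw]]] := eig_absvec Y0 ez1.
rewrite nz1 in hw.
have wz := pos_dot w0 wnz z0.
have h1 : forall i, (specrad Y *: w) 0 i <= (w *m Y) 0 i.
  by move=> i; rewrite mxE; exact: hw.
have h2 : forall i, 0 <= z i 0 by move=> i; exact: ltW (z0 i).
have le2 := dot_mono h1 h2.
have e5 : (w *m Y *m z) 0 0 = th * (w *m z) 0 0.
  by rewrite -mulmxA Yz -scalemxAr mxE.
have e6 : ((specrad Y *: w) *m z) 0 0 = specrad Y * (w *m z) 0 0.
  by rewrite -scalemxAl mxE.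
rewrite e5 e6 in le2.
have le3 : specrad Y <= th by move: le2; rewrite ler_pM2r.
by apply: le_anti; rewrite le1 le3.
Qed.

Lemma pf_irr (Y : 'M[R]_n) : (0 < n)%N -> irreducible_mx Y -> nonneg_mx Y ->
  exists z : 'cV_n, (forall i, 0 < z i 0) /\ Y *m z = specrad Y *: z.
Proof.
move=> n0 irr Y0; have [z [th [z0 Yz]]] := pf_irr_vec n0 irr Y0.
exists z; split; first exact: z0.
by rewrite Yz (pf_val n0 Y0 z0 Yz).
Qed.

End PF9.
Section Main1.
Variable R : realType.
Variable n : nat.
Hypothesis n0 : (0 < n)%N.
Variables (At K : 'M[R]_n) (rA : R).
Hypotheses (At0 : nonneg_mx At) (K0 : nonneg_mx K) (Knz : K != 0)
  (irrA : irreducible_mx At) (rA0 : 0 < rA) (rhoA : specrad (At + rA *: K) = 1).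

Definition Xr r := At + r *: K.

Lemma Xr0 r : 0 <= r -> nonneg_mx (Xr r).
Proof. by move=> r0 i j; rewrite !mxE addr_ge0 ?mulr_ge0. Qed.

Lemma Xrirr r : 0 <= r -> irreducible_mx (Xr r).
Proof.
move=> r0; apply: (irr_mono At0 _ irrA) => i j.
by rewrite !mxE lerDl mulr_ge0.
Qed.

Lemma K_pos_entry : exists a b, 0 < K a b.
Proof.
case: (pselect (exists a b, 0 < K a b)) => // hn; exfalso.
move/eqP: Knz; apply; apply/matrixP => a b; rewrite mxE.
apply/eqP; rewrite eq_le K0 andbT leNgt; apply/negP => h; apply: hn.
by exists a, b.
Qed.

Lemma mulXr_entry (u : 'rV_n) r j :
  (u *m Xr r) 0 j = (u *m At) 0 j + r * (u *m K) 0 j.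
Proof. by rewrite /Xr mulmxDr -scalemxAr [LHS]mxE [X in _ + X]mxE. Qed.

Lemma rho_La (u : 'rV_n) r : 0 <= r -> r < rA -> rv_ge0 u ->
  (forall j, u 0 j <= (u *m Xr r) 0 j) ->
  u *m Xr rA = u /\ (forall j, (u *m K) 0 j = 0).
Proof.
move=> r0 rr u0 hu1.
have rA0' : 0 <= rA by exact: ltW.
have [zY [zY0 hzY]] := pf_irr n0 (Xrirr rA0') (Xr0 rA0').
have rhoY : specrad (Xr rA) = 1 := rhoA.
rewrite rhoY scale1r in hzY.
have uK0 : forall j, 0 <= (u *m K) 0 j.
  by move=> j; rewrite mul_entry; apply: sumr_ge0 => k _; rewrite mulr_ge0.
have gE : forall j, (u *m Xr rA - u) 0 j =
    (u *m Xr r) 0 j - u 0 j + (rA - r) * (u *m K) 0 j.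
  move=> j; rewrite [LHS]mxE !mulXr_entry [(- u) 0 j]mxE; ring.
have rr' : 0 < rA - r by rewrite subr_gt0.
have g0 : rv_ge0 (u *m Xr rA - u).
  move=> j; rewrite gE; have := hu1 j; have := uK0 j; nra.
have gz : (u *m Xr rA - u) *m zY = 0 by rewrite mulmxBl -mulmxA hzY subrr.
have geq : u *m Xr rA - u = 0.
  apply/eqP; apply: contraT => gnz.
  by have := pos_dot g0 gnz zY0; rewrite gz mxE ltxx.
split; first by apply/eqP; rewrite -subr_eq0 geq.
move=> j; have := gE j; rewrite geq mxE => e.
have := hu1 j; have := uK0 j => h3 h4.
have : (rA - r) * (u *m K) 0 j = 0.
  apply/eqP; rewrite eq_le; apply/andP; split; first lra.
  by apply: mulr_ge0; [exact: ltW|exact: h3].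
by move/eqP; rewrite mulf_eq0 gt_eqF //= => /eqP.
Qed.

Lemma rho_Lb (u : 'rV_n) : rv_ge0 u -> u != 0 -> u *m Xr rA = u -> rv_gt0 u.
Proof.
move=> u0 unz uY.
have rA0' : 0 <= rA by exact: ltW.
have rhoY : specrad (Xr rA) = 1 := rhoA.
have h2 : specrad (Xr rA) < 2 by rewrite rhoY ltr1n.
have gd := resolvent_ge0 n0 (Xr0 rA0') h2.
have Npos := irr_resolvent_pos (Xrirr rA0') (Xr0 rA0') gd.
case: gd => uA _.
have u2 : u *m (2%:M - Xr rA) = u.
  by rewrite mulmxBr mul_mx_scalar uY scaler_nat mulr2n addrK.
have e : u = u *m invmx (2%:M - Xr rA).
  by rewrite -[X in X *m invmx _]u2 mulmxK.
have := pos_mul u0 unz Npos; by rewrite -e.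
Qed.

Lemma rho_Lc (u : 'rV_n) : rv_gt0 u -> (forall j, (u *m K) 0 j = 0) -> False.
Proof.
move=> upos uKz.
have [a [b hab]] := K_pos_entry.
have := uKz b; rewrite mul_entry => e.
have : u 0 a * K a b <= \sum_i u 0 i * K i b.
  by apply: (@elem_le_sum _ _ (fun i => u 0 i * K i b)) => i; rewrite mulr_ge0 // ltW.
rewrite e; have := mulr_gt0 (upos a) hab; lra.
Qed.

Lemma rho_lt1 r : 0 <= r -> r < rA -> specrad (Xr r) < 1.
Proof.
move=> r0 rr; rewrite ltNge; apply/negP => h1.
have [[z [ez nz]] _] := specrad_spec (Xr r) n0.
have [u [u0 [unz hu]]] := eig_absvec (Xr0 r0) ez.
rewrite nz in hu.
have hu1 : forall j, u 0 j <= (u *m Xr r) 0 j.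
  move=> j; have := hu j; have := u0 j; nra.
have [uY uK] := rho_La r0 rr u0 hu1.
exact: rho_Lc (rho_Lb u0 unz uY) uK.
Qed.

Lemma Npos r : 0 <= r -> r < rA ->
  (1%:M - Xr r) \in unitmx /\ forall i j, 0 < invmx (1%:M - Xr r) i j.
Proof.
move=> r0 rr; have g := resolvent_ge0 n0 (Xr0 r0) (rho_lt1 r0 rr).
split; first by case: g.
exact: irr_resolvent_pos (Xrirr r0) (Xr0 r0) g.
Qed.

Lemma Ndiff r1 r2 : (1%:M - Xr r1) \in unitmx -> (1%:M - Xr r2) \in unitmx ->
  invmx (1%:M - Xr r2) - invmx (1%:M - Xr r1) =
  invmx (1%:M - Xr r1) *m ((r2 - r1) *: K) *m invmx (1%:M - Xr r2).
Proof.
move=> u1 u2.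
have eA : (1%:M - Xr r1) - (1%:M - Xr r2) = (r2 - r1) *: K.
  by apply/matrixP => i j; rewrite !mxE; ring.
rewrite -eA mulmxBr mulmxBl mulVmx // mul1mx -mulmxA mulmxV // mulmx1.
done.
Qed.

Lemma mid_pos (N1 N2 : 'M[R]_n) : (forall i j, 0 < N1 i j) -> (forall i j, 0 < N2 i j) ->
  forall i j, 0 < (N1 *m K *m N2) i j.
Proof.
move=> p1 p2 i j; have [a [b hab]] := K_pos_entry.
have nk0 : forall c, 0 <= (N1 *m K) i c.
  by move=> c; rewrite mxE; apply: sumr_ge0 => k _; rewrite mulr_ge0 // ltW.
have h1 : 0 < (N1 *m K) i b.
  rewrite mxE; apply: lt_le_trans (_ : N1 i a * K a b <= _).
    exact: mulr_gt0.
  apply: (@elem_le_sum _ _ (fun k => N1 i k * K k b)) => k.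
  by rewrite mulr_ge0 // ltW.
rewrite mxE; apply: lt_le_trans (_ : (N1 *m K) i b * N2 b j <= _).
  exact: mulr_gt0.
apply: (@elem_le_sum _ _ (fun k => (N1 *m K) i k * N2 k j)) => k.
by rewrite mulr_ge0 // ltW.
Qed.

Variables (l : 'rV[R]_n) (B : 'M[R]_n).
Hypotheses (l0 : forall j, 0 < l 0 j) (B0 : nonneg_mx B)
  (Bc : forall j, exists i, B i j != 0).

Lemma LQB_pos (Q : 'M[R]_n) : (forall i j, 0 < Q i j) ->
  forall i j, 0 < (diag_mx l *m Q *m B) i j.
Proof.
move=> Qp i j; rewrite -mulmxA mul_diag_mx mxE; apply: mulr_gt0 => //.
have [k hk] := Bc j.
have bk : 0 < B k j by rewrite lt_def hk B0.
rewrite mxE; apply: lt_le_trans (_ : Q i k * B k j <= _).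
  exact: mulr_gt0.
apply: (@elem_le_sum _ _ (fun k => Q i k * B k j)) => k'.
by rewrite mulr_ge0 // ltW.
Qed.

Definition MM r := diag_mx l *m invmx (1%:M - Xr r) *m B.

Lemma MM_pos r : 0 <= r -> r < rA -> forall i j, 0 < MM r i j.
Proof. by move=> r0 rr; apply: LQB_pos; case: (Npos r0 rr). Qed.

Lemma MM_diff r1 r2 : 0 <= r1 -> r1 < r2 -> r2 < rA ->
  forall i j, 0 < (MM r2 - MM r1) i j.
Proof.
move=> r10 r12 r2A.
have r20 : 0 <= r2 by apply: le_trans r10 (ltW r12).
have [u1 p1] := Npos r10 (lt_trans r12 r2A).
have [u2 p2] := Npos r20 r2A.
have -> : MM r2 - MM r1 = diag_mx l *m (invmx (1%:M - Xr r2) - invmx (1%:M - Xr r1)) *m B.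
  by rewrite /MM -mulmxBl -mulmxBr.
apply: LQB_pos => i j; rewrite Ndiff // -scalemxAr -scalemxAl mxE.
by apply: mulr_gt0; [rewrite subr_gt0|exact: mid_pos].
Qed.

Lemma MM_mono r1 r2 : 0 <= r1 -> r1 <= r2 -> r2 < rA ->
  forall i j, MM r1 i j <= MM r2 i j.
Proof.
move=> r10 r12 r2A i j; case: (ltgtP r1 r2) r12 => // [h _|-> _]; last by [].
by have := MM_diff r10 h r2A i j; rewrite !mxE subr_gt0 => /ltW.
Qed.

End Main1.
Section Feas.
Variable R : realType.
Variable n : nat.
Hypothesis n0 : (0 < n)%N.
Variable i1 : 'I_n.

Lemma one_entry (w : 'rV[R]_n) (P : 'M[R]_n) j :
  (w *m (1%:M - P)) 0 j = w 0 j - (w *m P) 0 j.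
Proof. by rewrite mulB_entry mul1r. Qed.

Lemma feas_mono (P Q : 'M[R]_n) : (forall i j, P i j <= Q i j) ->
  feasible i1 Q `<=` feasible i1 P.
Proof.
move=> PQ w [wp [w1 wQ]]; split => //; split => // j.
have := wQ j; rewrite !one_entry => h; apply: le_trans h _.
rewrite lerD2l lerN2 !mul_entry; apply: ler_sum => i _.
by apply: ler_wpM2l; [exact: ltW|exact: PQ].
Qed.

Lemma feas_proper (P Q : 'M[R]_n) (x : 'rV[R]_n) (k : 'I_n) : k != i1 ->
  (forall i j, 0 < P i j) -> (forall i j, P i j < Q i j) -> rv_gt0 x ->
  (forall j, (x *m P) 0 j < x 0 j) ->
  exists w, feasible i1 P w /\ ~ feasible i1 Q w.
Proof.
move=> ki Ppos PQ xpos xP.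
have P0 : nonneg_mx P by move=> i j; exact: ltW.
have [m Hm] := fin_argmax i1 (fun j => (x *m P) 0 j / x 0 j).
set c := (x *m P) 0 m / x 0 m in Hm.
have c1 : c < 1 by rewrite /c ltr_pdivrMr // mul1r.
have hc : forall j, (x *m P) 0 j <= c * x 0 j.
  by move=> j; have := Hm j; rewrite ler_pdivrMr.
have [uA T0] := ratio_inv P0 xpos c1 hc.
set w0 := row i1 (invmx (1%:M - P)).
have hw0 : w0 *m (1%:M - P) = row i1 1%:M by rewrite /w0 -row_mul mulVmx.
have w00 : rv_ge0 w0 by move=> j; rewrite mxE T0.
have w0nz : w0 != 0.
  apply/eqP => e; move: hw0; rewrite e mul0mx => /rowP /(_ i1).
  by rewrite !mxE eqxx => /eqP; rewrite eq_sym oner_eq0.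
have w0P := pos_mul w00 w0nz Ppos.
have w0E : forall j, w0 0 j = (row i1 (1%:M : 'M[R]_n)) 0 j + (w0 *m P) 0 j.
  move=> j; have := congr1 (fun v : 'rV[R]_n => v 0 j) hw0.
  rewrite /= one_entry => <-; ring.
have w0pos : rv_gt0 w0.
  move=> j; rewrite w0E; apply: ltr_wpDl (w0P j).
  by rewrite !mxE; exact: ler0n.
set a := (w0 0 i1)^-1.
have a0 : 0 < a by rewrite invr_gt0.
exists (a *: w0); split.
  split; first by move=> j; rewrite mxE mulr_gt0.
  split; first by rewrite mxE mulVf // gt_eqF.
  move=> j; rewrite -scalemxAl hw0 !mxE; apply: mulr_ge0; [exact: ltW|exact: ler0n].
move=> [_ [_ hQ]]; have := hQ k; rewrite one_entry.
have hk : (a *: w0 *m (1%:M - P)) 0 k = 0.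
  have ik : i1 != k by rewrite eq_sym.
  by rewrite -scalemxAl hw0 !mxE (negbTE ik) mulr0.
rewrite one_entry in hk.
have : (a *: w0 *m P) 0 i1 * 0 + 0 <= 0 by rewrite mulr0 addr0.
move=> _.
have lt : (a *: w0 *m P) 0 k < (a *: w0 *m Q) 0 k.
  rewrite -subr_gt0 !mul_entry -sumrB.
  apply: lt_le_trans (_ : (a *: w0) 0 i1 * Q i1 k - (a *: w0) 0 i1 * P i1 k <= _).
    by rewrite -mulrBr mulr_gt0 ?subr_gt0 // mxE mulr_gt0.
  apply: (@elem_le_sum _ _ (fun i => (a *: w0) 0 i * Q i k - (a *: w0) 0 i * P i k)) => i.
  by rewrite -mulrBr mulr_ge0 // ?subr_ge0 ?ltW // mxE mulr_gt0.
lra.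
Qed.

Lemma fixed_unique (P : 'M[R]_n) (ws x : 'rV[R]_n) : (forall i j, 0 < P i j) ->
  rv_gt0 ws -> ws *m P = ws -> rv_gt0 x -> x *m P = x ->
  exists c, x = c *: ws.
Proof.
move=> Ppos wpos wP xpos xP.
have [m Hm] := fin_argmax i1 (fun j => - (x 0 j / ws 0 j)).
set c := x 0 m / ws 0 m in Hm.
have hc : forall j, c * ws 0 j <= x 0 j.
  by move=> j; have := Hm j; rewrite lerN2 ler_pdivlMr.
set d := x - c *: ws.
have dE : forall j, d 0 j = x 0 j - c * ws 0 j by move=> j; rewrite !mxE.
have d0 : rv_ge0 d by move=> j; rewrite dE subr_ge0.
have dm : d 0 m = 0 by rewrite dE /c divfK ?subrr // gt_eqF.
have dP : d *m P = d by rewrite mulmxBl xP -scalemxAl wP.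
exists c; apply/eqP; rewrite -subr_eq0 -/d; apply: contraT => dnz.
have := pos_mul d0 dnz Ppos m; by rewrite dP dm ltxx.
Qed.

Lemma dot_zero (g : 'rV[R]_n) (z : 'cV_n) : rv_ge0 g -> (forall i, 0 < z i 0) ->
  g *m z = 0 -> g = 0.
Proof.
move=> g0 z0 gz; apply/eqP; apply: contraT => gnz.
by have := pos_dot g0 gnz z0; rewrite gz mxE ltxx.
Qed.

Lemma feas_unique (P : 'M[R]_n) (ws : 'rV[R]_n) (z : 'cV_n) :
  (forall i j, 0 < P i j) -> rv_gt0 ws -> ws 0 i1 = 1 -> ws *m P = ws ->
  (forall i, 0 < z i 0) -> P *m z = z ->
  feasible i1 P = [set ws].
Proof.
move=> Ppos wpos w1 wP z0 Pz.
apply/seteqP; split => x /=.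
  move=> [xpos [x1 xg]].
  have g0 : x *m (1%:M - P) = 0.
    apply: (dot_zero xg z0).
    by rewrite -mulmxA mulmxBl mul1mx Pz subrr mulmx0.
  have xP : x *m P = x.
    by apply/eqP; rewrite eq_sym -subr_eq0 -[X in X - _]mulmx1 -mulmxBr g0.
  have [c xc] := fixed_unique Ppos wpos wP xpos xP.
  have c1 : c = 1 by move: x1; rewrite xc mxE w1 mulr1.
  by rewrite xc c1 scale1r.
move=> ->; split => //; split => // j.
by rewrite one_entry wP subrr.
Qed.

End Feas.
Section Final.
Variable R : realType.
Variable n : nat.

Lemma pf_pos_right (P : 'M[R]_n) : (0 < n)%N -> (forall i j, 0 < P i j) ->
  exists z : 'cV_n, (forall i, 0 < z i 0) /\ P *m z = z *+ 0 + specrad P *: z.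
Proof.
move=> n0 Ppos.
have PTpos : forall i j, 0 < P^T i j by move=> i j; rewrite mxE.
have [v [v0 [hv _]]] := pf_pos n0 PTpos.
have hz : P *m v^T = specrad P^T *: v^T.
  apply/matrixP => i j; rewrite (ord1 j).
  move/matrixP: hv => /(_ 0 i); rewrite !mxE => <-.
  by apply: eq_bigr => k _; rewrite !mxE mulrC.
have z0 : forall i, 0 < v^T i 0 by move=> i; rewrite mxE v0.
have P0 : nonneg_mx P by move=> i j; exact: ltW.
have e := pf_val n0 P0 z0 hz.
exists v^T; split; first exact: z0.
by rewrite mulr0n add0r -e.
Qed.

Lemma row_lt (x : 'rV[R]_n) (P Q : 'M[R]_n) (i0 : 'I_n) : rv_gt0 x ->
  (forall i j, P i j < Q i j) -> forall j, (x *m P) 0 j < (x *m Q) 0 j.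
Proof.
move=> xpos PQ j.
rewrite -subr_gt0 !mul_entry -sumrB.
apply: lt_le_trans (_ : x 0 i0 * Q i0 j - x 0 i0 * P i0 j <= _).
  by rewrite -mulrBr mulr_gt0 ?subr_gt0.
apply: (@elem_le_sum _ _ (fun i => x 0 i * Q i j - x 0 i * P i j)) => i.
by rewrite -mulrBr mulr_ge0 // ?subr_ge0 ?ltW.
Qed.

End Final.

Theorem mainTheorem10 (R : realType) (n : nat) (hn : (1 < n)%N)
    (A K B : 'M[R]_n) (delta l : 'rV[R]_n) (rA rstar : R) :
  nonneg_mx A -> nonneg_mx K -> K != 0 ->
  (forall j, 0 < delta 0 j <= 1) ->
  (forall j, 0 < l 0 j) ->
  nonneg_mx B -> (forall j, exists i, B i j != 0) ->
  let At := A + K *m diag_mx delta in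
  let M := Mr (diag_mx l) At K B in
  let i1 := idx1 hn in
  irreducible_mx At -> specrad At < 1 ->
  0 < rA -> specrad (At + rA *: K) = 1 ->
  specrad (M 0) < 1 ->
  0 < rstar < rA -> specrad (M rstar) = 1 ->
  (* (i) *)
  (forall r1 r2 : R, 0 <= r1 -> r1 < r2 -> r2 <= rstar ->
     feasible i1 (M r2) `<` feasible i1 (M r1) /\
     feasible i1 (M r1) `<=` feasible i1 (M 0)) /\
  (* (ii) *)
  (exists wstar : 'rV[R]_n,
     rv_gt0 wstar /\ wstar 0 i1 = 1 /\ wstar *m M rstar = wstar /\
     feasible i1 (M rstar) = [set wstar]) /\
  (forall w : 'rV[R]_n, feasible i1 (M rstar) w ->
     ~ rv_gt0 (w *m (1%:M - M rstar))).
Proof.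
move=> HA HK HKnz Hd Hl HB HBc At M i1 irrA _ rA0 rhoA _ hrs rhos.
have n0 : (0 < n)%N := ltnW hn.
have At0 : nonneg_mx At.
  move=> i j; rewrite /At mxE mul_mx_diag mxE addr_ge0 // mulr_ge0 //.
  by case/andP: (Hd j) => /ltW.
have ME : forall r, M r = MM At K l B r.
  by move=> r; rewrite /M /Mr /MM /Xr [in RHS]opprD [in RHS]addrA.
case/andP: hrs => rs0 rsA.
have Mspos := MM_pos n0 At0 HK HKnz irrA rA0 rhoA Hl HB HBc (ltW rs0) rsA.
have rhos' : specrad (MM At K l B rstar) = 1 by rewrite -ME.
have [u [u0 [hu _]]] := pf_pos n0 Mspos.
rewrite rhos' scale1r in hu.
have [z [z0 hz]] := pf_pos_right n0 Mspos.
rewrite rhos' mulr0n add0r scale1r in hz.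
set ws := (u 0 i1)^-1 *: u.
have a0 : 0 < (u 0 i1)^-1 by rewrite invr_gt0.
have wspos : rv_gt0 ws by move=> j; rewrite mxE mulr_gt0.
have ws1 : ws 0 i1 = 1 by rewrite mxE mulVf // gt_eqF.
have wsM : ws *m MM At K l B rstar = ws by rewrite -scalemxAl hu.
have Fu := feas_unique (i1 := i1) Mspos wspos ws1 wsM z0 hz.
split; last split.
- move=> r1 r2 r10 r12 r2s.
  have r2A : r2 < rA := le_lt_trans r2s rsA.
  have r1s : r1 < rstar := lt_le_trans r12 r2s.
  rewrite !ME; split; last first.
    apply: feas_mono => i j.
    have hm := MM_mono n0 At0 HK HKnz irrA rA0 rhoA Hl HB HBc.
    by apply: hm => //; exact: lt_trans r12 r2A.
  split.
    apply: feas_mono => i j.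
    have hm := MM_mono n0 At0 HK HKnz irrA rA0 rhoA Hl HB HBc.
    by apply: hm => //; exact: ltW r12.
  set k : 'I_n := Ordinal hn.
  have ki : k != i1.
    by apply/eqP => /(congr1 val); rewrite /k /i1 /idx1 /=.
  have P1pos := MM_pos n0 At0 HK HKnz irrA rA0 rhoA Hl HB HBc r10 (lt_trans r12 r2A).
  have P12 : forall i j, MM At K l B r1 i j < MM At K l B r2 i j.
    move=> i j; have := MM_diff n0 At0 HK HKnz irrA rA0 rhoA Hl HB HBc r10 r12 r2A i j.
    by rewrite !mxE subr_gt0.
  have P1s : forall i j, MM At K l B r1 i j < MM At K l B rstar i j.
    move=> i j; have := MM_diff n0 At0 HK HKnz irrA rA0 rhoA Hl HB HBc r10 r1s rsA i j.
    by rewrite !mxE subr_gt0.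
  have xP : forall j, (ws *m MM At K l B r1) 0 j < ws 0 j.
    move=> j; have := row_lt i1 wspos P1s j; by rewrite wsM.
  have [w [wF wnF]] := feas_proper ki P1pos P12 wspos xP.
  by move=> h; apply: wnF; apply: h.
- exists ws; split; first exact: wspos.
  split; first exact: ws1.
  by rewrite ME; split.
- move=> w; rewrite ME Fu => -> /(_ i1).
  by rewrite one_entry wsM subrr ltxx.
Qed.
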